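(* Let $G$ be a graph with $m$ edges and $n^+$ positive adjacency eigenvalues. For every integer $k$ with $1\le k\le n^+$, \[6\,t(G)\ \ge\ \frac{1}{\sqrt{k}}\,\big(s_k\big)^{3/2}-\big(2m-s_k\big)^{3/2}.\]
   Context: For a simple graph $G$ on $n$ vertices and $m$ edges, let $\lambda_1\ge\cdots\ge\lambda_n$ be the eigenvalues of its adjacency matrix; $n^+$ is the number of positive eigenvalues. $t(G)$ denotes the number of triangles in $G$, and $s_k=\sum_{i=1}^k\lambda_i^2$. *)

(* Defs.v *)
From HB Require Import structures.
From mathcomp Require Import all_boot all_order all_algebra.
Set Implicit Arguments. Unset Strict Implicit. Unset Printing Implicit Defensive.
Import Order.TTheory GRing.Theory Num.Theory.
Local Open Scope ring_scope.

Definition simple_graph (n : nat) (e : rel 'I_n) : Prop :=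
  (forall i j, e i j = e j i) /\ (forall i, ~~ e i i).

Definition adj_mx (R : nzRingType) (n : nat) (e : rel 'I_n) : 'M[R]_n :=
  \matrix_(i, j) (e i j)%:R.

Definition num_edges (n : nat) (e : rel 'I_n) : nat :=
  #|[set p : 'I_n * 'I_n | (p.1 < p.2)%N && e p.1 p.2]|.

Definition num_triangles (n : nat) (e : rel 'I_n) : nat :=
  #|[set p : 'I_n * 'I_n * 'I_n |
      [&& (p.1.1 < p.1.2)%N, (p.1.2 < p.2)%N,
          e p.1.1 p.1.2, e p.1.2 p.2 & e p.1.1 p.2]]|.

(* lam is the spectrum of the real matrix A, listed with multiplicity in
   nonincreasing order lam_1 >= ... >= lam_n: the characteristic polynomial
   of A is prod (X - lam_i). *)
Definition sorted_spectrum (R : numFieldType) (n : nat) (A : 'M[R]_n)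
  (lam : seq R) : Prop :=
  char_poly A = \prod_(l <- lam) ('X - l%:P) /\ sorted (fun x y => y <= x) lam.

Definition n_pos (R : numFieldType) (lam : seq R) : nat := count (fun x => 0 < x) lam.

(* s_k = sum_{i=1}^k lam_i^2 (lam is 0-indexed here) *)
Definition s_k (R : numFieldType) (lam : seq R) (k : nat) : R :=
  \sum_(i < k) lam`_i ^+ 2.

Definition pow32 (R : rcfType) (x : R) : R := x * Num.sqrt x.

(* Main.v *)
Require Import Defs.
From HB Require Import structures.
From mathcomp Require Import all_boot all_order all_algebra.
From mathcomp Require Import sesquilinear spectral mxred.
From mathcomp Require Import zify ring lra.
From mathcomp.real_closed Require Import complex.
Import Order.TTheory GRing.Theory Num.Theory.
Local Open Scope ring_scope.

Lemma char_poly_similar (F : fieldType) n (P D : 'M[F]_n) : P \in unitmx ->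
  char_poly (invmx P *m D *m P) = char_poly D.
Proof.
move=> Pu; rewrite /char_poly /char_poly_mx.
set Q := map_mx (@polyC F) P.
have -> : 'X%:M - map_mx (@polyC F) (invmx P *m D *m P) =
   map_mx (@polyC F) (invmx P) *m ('X%:M - map_mx (@polyC F) D) *m Q.
  rewrite !map_mxM mulmxBr mulmxBl; congr (_ - _).
  rewrite mul_mx_scalar -scalemxAl -mul_scalar_mx -map_mxM mulVmx //.
  by rewrite map_mx1 mulmx1.
rewrite !det_mulmx mulrC mulrA -det_mulmx -map_mxM mulmxV // map_mx1 det1 mul1r.
done.
Qed.


Lemma spec_adj (R : rcfType) n (e : rel 'I_n) : simple_graph e ->
  exists d : 'rV[R[i]]_n,
   [/\ char_poly (adj_mx R[i] e) = \prod_(i < n) ('X - (d 0 i)%:P),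
       \tr (adj_mx R[i] e *m adj_mx R[i] e) = \sum_(i < n) d 0 i ^+ 2 &
       \tr (adj_mx R[i] e *m adj_mx R[i] e *m adj_mx R[i] e) = \sum_(i < n) d 0 i ^+ 3].
Proof.
move=> [sym irr].
set B := adj_mx R[i] e.
have Bn : B \is normalmx.
  apply: symmetric_normalmx.
    rewrite is_hermitianmxE expr0 scale1r; apply/eqP/matrixP => i j.
    by rewrite !mxE sym.
  by apply/mxOverP => i j; rewrite !mxE realn.
have := orthomx_spectralP Bn.
set P := spectralmx B; set d := spectral_diag B => BE.
have Pu : P \in unitmx by apply: spectral_unit.
have simM X Y : (invmx P *m X *m P) *m (invmx P *m Y *m P) = invmx P *m (X *m Y) *m P.
  by rewrite -!mulmxA (mulmxA P) mulmxV // mul1mx.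
have simT X : \tr (invmx P *m X *m P) = \tr X.
  by rewrite mxtrace_mulC mulmxA mulmxV // mul1mx.
exists d; split.
- rewrite BE char_poly_similar // char_poly_trig ?diag_mx_is_trig //.
  by apply: eq_bigr => i _; rewrite mxE eqxx mulr1n.
- rewrite BE simM simT mulmx_diag mxtrace_diag.
  by apply: eq_bigr => i _; rewrite mxE expr2.
- rewrite BE !simM simT !mulmx_diag mxtrace_diag.
  by apply: eq_bigr => i _; rewrite !mxE exprSr expr2.
Qed.


Lemma card_sum (T : finType) (P : pred T) : #|[set x | P x]| = (\sum_x (P x : nat))%N.
Proof.
rewrite -sum1dep_card big_mkcond /=; apply: eq_bigr => x _; by case: (P x).
Qed.

Lemma edges_sum n (e : rel 'I_n) : simple_graph e ->
  (\sum_i \sum_j (e i j : nat) = 2 * num_edges e)%N.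
Proof.
move=> [sym irr].
rewrite /num_edges card_sum.
have -> : (\sum_(x : 'I_n * 'I_n) ((x.1 < x.2)%N && e x.1 x.2 : nat) =
   \sum_(i : 'I_n) \sum_(j : 'I_n) ((i < j)%N && e i j : nat))%N by rewrite pair_bigA.
have -> : (\sum_i \sum_j (e i j : nat) =
   \sum_(i : 'I_n) \sum_(j : 'I_n) ((i < j)%N && e i j : nat) + \sum_(i : 'I_n) \sum_(j : 'I_n) ((j < i)%N && e j i : nat))%N.
  rewrite -big_split /=; apply: eq_bigr => i _; rewrite -big_split /=.
  apply: eq_bigr => j _; case: (ltngtP i j) => [_|_|/val_inj ->] /=.
  - by rewrite addn0.
  - by rewrite sym.
  - by rewrite (negbTE (irr j)).
by rewrite [X in (_ + X)%N]exchange_big /= addnn -mul2n.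
Qed.

Lemma six (a b c : nat) : a != b -> b != c -> a != c ->
  ([&& a < b & b < c] + [&& a < c & c < b] + [&& b < a & a < c] + [&& b < c & c < a]
   + [&& c < a & a < b] + [&& c < b & b < a] = 1)%N.
Proof.
move=> ab bc ac.
case: (ltngtP a b) => h1; case: (ltngtP b c) => h2; case: (ltngtP a c) => h3 //=; lia.
Qed.

Lemma swap23 n (h : 'I_n -> 'I_n -> 'I_n -> nat) :
  (\sum_i \sum_j \sum_k h i j k = \sum_i \sum_j \sum_k h i k j)%N.
Proof. by apply: eq_bigr => i _; exact: exchange_big. Qed.
Lemma swap12 n (h : 'I_n -> 'I_n -> 'I_n -> nat) :
  (\sum_i \sum_j \sum_k h i j k = \sum_i \sum_j \sum_k h j i k)%N.
Proof. exact: exchange_big. Qed.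
Lemma sum3D n (h1 h2 : 'I_n -> 'I_n -> 'I_n -> nat) :
  (\sum_i \sum_j \sum_k (h1 i j k + h2 i j k) =
   \sum_i \sum_j \sum_k h1 i j k + \sum_i \sum_j \sum_k h2 i j k)%N.
Proof.
rewrite -big_split; apply: eq_bigr => i _; rewrite -big_split; apply: eq_bigr => j _.
by rewrite -big_split.
Qed.

Lemma tri_sum n (e : rel 'I_n) : simple_graph e ->
  (\sum_i \sum_j \sum_k (e i j && e j k && e k i : nat) = 6 * num_triangles e)%N.
Proof.
move=> [sym irr].
set f := fun i j k : 'I_n => (e i j && e j k && e k i : nat).
set g := fun i j k : 'I_n => ([&& (i < j)%N & (j < k)%N] * f i j k)%N.
have T : num_triangles e = (\sum_i \sum_j \sum_k g i j k)%N.
  rewrite /num_triangles card_sum.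
  have -> : (\sum_(x : ('I_n * 'I_n) * 'I_n) ([&& (x.1.1 < x.1.2)%N, (x.1.2 < x.2)%N,
          e x.1.1 x.1.2, e x.1.2 x.2 & e x.1.1 x.2] : nat) =
     \sum_(i : 'I_n) \sum_(j : 'I_n) \sum_(k : 'I_n) ([&& (i < j)%N, (j < k)%N,
          e i j, e j k & e i k] : nat))%N.
    by rewrite pair_bigA /= pair_bigA.
  apply: eq_bigr => i _; apply: eq_bigr => j _; apply: eq_bigr => k _.
  rewrite /g /f [e k i]sym.
  by case: (i < j)%N; case: (j < k)%N; case: (e i j); case: (e j k); case: (e i k).
have E i j k : f i j k = (g i j k + g i k j + g j i k + g j k i + g k i j + g k j i)%N.
  have f1 : f i k j = f i j k.
    by rewrite /f (sym i k) (sym k j) (sym j i); case: (e i j); case: (e j k); case: (e k i).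
  have f2 : f j i k = f i j k.
    by rewrite /f (sym j i) (sym i k) (sym k j); case: (e i j); case: (e j k); case: (e k i).
  have f3 : f j k i = f i j k.
    by rewrite /f; case: (e i j); case: (e j k); case: (e k i).
  have f4 : f k i j = f i j k.
    by rewrite /f; case: (e i j); case: (e j k); case: (e k i).
  have f5 : f k j i = f i j k.
    by rewrite /f (sym k j) (sym j i) (sym i k); case: (e i j); case: (e j k); case: (e k i).
  rewrite /g f1 f2 f3 f4 f5 -!mulnDl.
  case Hf: (e i j && e j k && e k i); rewrite /f Hf ?muln0 //= muln1.
  move/andP: Hf => [/andP [hij hjk] hki].
  have dij : (i : nat) != j by apply/eqP => /val_inj E; move: hij; rewrite E (negbTE (irr j)).
  have djk : (j : nat) != k by apply/eqP => /val_inj E; move: hjk; rewrite E (negbTE (irr k)).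
  have dik : (i : nat) != k by apply/eqP => /val_inj E; move: hki; rewrite E (negbTE (irr k)).
  by rewrite six.
rewrite T.
have S2 : (\sum_i \sum_j \sum_k g i k j = \sum_i \sum_j \sum_k g i j k)%N.
  exact (@swap23 n (fun i j k => g i k j)).
have S3 : (\sum_i \sum_j \sum_k g j i k = \sum_i \sum_j \sum_k g i j k)%N.
  exact (@swap12 n (fun i j k => g j i k)).
have S4 : (\sum_i \sum_j \sum_k g j k i = \sum_i \sum_j \sum_k g i j k)%N.
  etransitivity; first exact (@swap12 n (fun i j k => g j k i)).
  exact: S2.
have S5 : (\sum_i \sum_j \sum_k g k i j = \sum_i \sum_j \sum_k g i j k)%N.
  etransitivity; first exact (@swap23 n (fun i j k => g k i j)).
  exact: S3.
have S6 : (\sum_i \sum_j \sum_k g k j i = \sum_i \sum_j \sum_k g i j k)%N.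
  etransitivity; first exact (@swap23 n (fun i j k => g k j i)).
  exact: S4.
transitivity (\sum_i \sum_j \sum_k
   (g i j k + g i k j + g j i k + g j k i + g k i j + g k j i))%N.
  apply: eq_bigr => i _; apply: eq_bigr => j _; apply: eq_bigr => k _; exact: E.
rewrite !sum3D S2 S3 S4 S5 S6; lia.
Qed.

Lemma boolM (R : nzSemiRingType) (a b : bool) : (a%:R * b%:R : R) = (a && b)%:R.
Proof. by case: a; case: b; rewrite ?mul1r ?mul0r. Qed.

Lemma tr2 (R : nzRingType) n (e : rel 'I_n) : simple_graph e ->
  \tr (adj_mx R e *m adj_mx R e) = (2 * num_edges e)%:R.
Proof.
move=> G; rewrite -(@edges_sum n e G) natr_sum /mxtrace; apply: eq_bigr => i _.
rewrite natr_sum !mxE; apply: eq_bigr => j _.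
rewrite !mxE boolM; case: G => sym _; rewrite (sym j i).
by case: (e i j).
Qed.

Lemma tr3 (R : nzRingType) n (e : rel 'I_n) : simple_graph e ->
  \tr (adj_mx R e *m adj_mx R e *m adj_mx R e) = (6 * num_triangles e)%:R.
Proof.
move=> G; rewrite -(@tri_sum n e G) natr_sum /mxtrace; apply: eq_bigr => i _.
rewrite mxE.
rewrite (eq_bigr (fun k => \sum_j (adj_mx R e i j * adj_mx R e j k * adj_mx R e k i))); last first.
  by move=> k _; rewrite mxE big_distrl.
rewrite exchange_big natr_sum /=; apply: eq_bigr => j _.
rewrite natr_sum; apply: eq_bigr => k _.
by rewrite !mxE !boolM.
Qed.


Lemma first_part (R : rcfType) (x : nat -> R) k : (0 < k)%N ->
  (forall i, (i < k)%N -> 0 <= x i) ->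
  (Num.sqrt (k%:R : R))^-1 * pow32 (\sum_(i < k) x i ^+ 2) <= \sum_(i < k) x i ^+ 3.
Proof.
move=> k0 xpos.
set s := \sum_(i < k) x i ^+ 2.
have s0 : 0 <= s by apply: sumr_ge0 => i _; exact: sqr_ge0.
have kpos : 0 < (k%:R : R) by rewrite ltr0n.
set r := Num.sqrt (k%:R : R).
have r0 : 0 < r by rewrite sqrtr_gt0.
set a := Num.sqrt s / r.
have a0 : 0 <= a by rewrite divr_ge0 // ?sqrtr_ge0 // ltW.
have ka : k%:R * a ^+ 2 = s.
  rewrite /a expr_div_n !sqr_sqrtr // ?ler0n //.
  by field; rewrite lt0r_neq0.
have term i : (i < k)%N -> 3%:R * a * x i ^+ 2 - a ^+ 3 <= 2%:R * x i ^+ 3.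
  move=> ik; have := xpos i ik => xi0.
  have h : 0 <= (x i - a) ^+ 2 * (2%:R * x i + a) by apply: mulr_ge0; [exact: sqr_ge0| lra].
  nra.
have sum : \sum_(i < k) (3%:R * a * x i ^+ 2 - a ^+ 3) <= \sum_(i < k) 2%:R * x i ^+ 3.
  by apply: ler_sum => i _; apply: term.
rewrite sumrB -mulr_sumr -mulr_sumr sumr_const card_ord -/s in sum.
have -> : (Num.sqrt (k%:R : R))^-1 * pow32 s = a * s.
  by rewrite /pow32 /a -/r; field; rewrite lt0r_neq0.
have e3 : a * (a * a *+ k) = a * s by rewrite -ka -mulr_natl; ring.
rewrite e3 -mulr_sumr in sum; lra.
Qed.

Lemma second_part (R : rcfType) (x : nat -> R) k L :
  - pow32 (\sum_(k <= i < L) x i ^+ 2) <= \sum_(k <= i < L) x i ^+ 3.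
Proof.
set q := \sum_(k <= i < L) x i ^+ 2.
have q0 : 0 <= q by apply: sumr_ge0 => i _; exact: sqr_ge0.
set r := Num.sqrt q.
have r0 : 0 <= r by apply: sqrtr_ge0.
have term i : (k <= i < L)%N -> - r * x i ^+ 2 <= x i ^+ 3.
  move=> iin.
  have xq : x i ^+ 2 <= q.
    case/andP: iin => ki iL.
    rewrite /q (big_cat_nat (n := i)) //=; last exact: ltnW.
    rewrite [\sum_(i <= _ < L) _]big_ltn //.
    have h1 : 0 <= \sum_(k <= j < i) x j ^+ 2 by apply: sumr_ge0 => j _; exact: sqr_ge0.
    have h2 : 0 <= \sum_(i.+1 <= j < L) x j ^+ 2 by apply: sumr_ge0 => j _; exact: sqr_ge0.
    lra.
  have nx : `|x i| <= r by rewrite -sqrtr_sqr; apply: ler_wsqrtr.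
  have nx2 : - r <= x i by move: nx; rewrite ler_norml => /andP[].
  have : 0 <= x i ^+ 2 * (x i + r) by apply: mulr_ge0; [exact: sqr_ge0 | lra].
  nra.
have : \sum_(k <= i < L) (- r * x i ^+ 2) <= \sum_(k <= i < L) x i ^+ 3.
  rewrite big_nat_cond [X in _ <= X]big_nat_cond; apply: ler_sum => i /andP[iin _].
  exact: term.
rewrite -mulr_sumr -/q /pow32 -/r => h; lra.
Qed.


Lemma sorted_pos (R : numDomainType) (s : seq R) i :
  sorted (fun x y => y <= x) s -> (i < count (fun x : R => (0 < x)%R) s)%N -> 0 < s`_i.
Proof.
elim: s i => [|x t IH] i //= st.
have tr : transitive (fun x y : R => y <= x) by move=> a b c h1 h2; exact: le_trans h2 h1.
case: (boolP (0 < x)) => x0 /=.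
  case: i => [//|i] /=; rewrite add1n ltnS; apply: IH.
  exact: (path_sorted st).
rewrite add0n => ct; exfalso.
have := order_path_min tr st => /allP al.
have /hasP [y yt y0] : has (fun y => 0 < y) t by rewrite has_count; exact: leq_ltn_trans (leq0n i) ct.
have := al y yt => /= yx.
by move: x0; rewrite (lt_le_trans y0 yx).
Qed.

Theorem lemma2p2 (R : rcfType) (n : nat) (e : rel 'I_n) (lam : seq R) (k : nat) :
  simple_graph e ->
  sorted_spectrum (adj_mx R e) lam ->
  (1 <= k)%N -> (k <= n_pos lam)%N ->
  6 * (num_triangles e)%:R >=
    (Num.sqrt (k%:R : R))^-1 * pow32 (s_k lam k)
    - pow32 (2 * (num_edges e)%:R - s_k lam k).
Proof.
move=> G [cp st] k1 kpos.
have [d [cpC t2C t3C]] := @spec_adj R n e G.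
have mapA : map_mx (real_complex R) (adj_mx R e) = adj_mx R[i] e.
  by apply/matrixP => i j; rewrite !mxE rmorph_nat.
have cpC' : char_poly (adj_mx R[i] e) = \prod_(x <- map (real_complex R) lam) ('X - x%:P).
  rewrite -mapA -map_char_poly cp rmorph_prod big_map.
  by apply: eq_bigr => l _ /=; rewrite map_polyXsubC.
have pe : perm_eq (map (real_complex R) lam) [seq d 0 i | i <- enum 'I_n].
  apply: prod_XsubC_eq; rewrite -cpC' cpC big_map big_enum /=.
  done.
have psum (p : nat) : \sum_(i < n) d 0 i ^+ p = (real_complex R) (\sum_(l <- lam) l ^+ p).
  transitivity (\sum_(x <- [seq d 0 i | i <- enum 'I_n]) x ^+ p).
    by rewrite big_map big_enum.
  rewrite -(perm_big _ pe) big_map (rmorph_sum (real_complex R)).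
  by apply: eq_bigr => l _; rewrite rmorphXn.
have S2 : \sum_(l <- lam) l ^+ 2 = (2 * num_edges e)%:R.
  apply: complexI; rewrite -psum -t2C (@tr2 _ n e G); by rewrite rmorph_nat.
have S3 : \sum_(l <- lam) l ^+ 3 = (6 * num_triangles e)%:R.
  apply: complexI; rewrite -psum -t3C (@tr3 _ n e G); by rewrite rmorph_nat.
have kL : (k <= size lam)%N by apply: leq_trans kpos (count_size _ _).
have split p : \sum_(l <- lam) l ^+ p =
    \sum_(i < k) lam`_i ^+ p + \sum_(k <= i < size lam) lam`_i ^+ p.
  by rewrite (big_nth 0) (big_cat_nat (n := k)) //= big_mkord.
have pos i : (i < k)%N -> 0 <= lam`_i.
  by move=> ik; apply/ltW/sorted_pos => //; exact: leq_trans ik kpos.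
have P1 := @first_part R (fun i => lam`_i) k k1 pos.
have P2 := @second_part R (fun i => lam`_i) k (size lam).
rewrite /= in P1 P2.
have E2 : 2 * (num_edges e)%:R - s_k lam k = \sum_(k <= i < size lam) lam`_i ^+ 2.
  by rewrite -natrM -S2 split /s_k; ring.
rewrite E2 -natrM -S3 split; rewrite /s_k; lra.
Qed.
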